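(* Let $\psi:\mathbb{R}^r\to\mathbb{R}$, let $S\subseteq\mathbb{R}^r$ be nonempty and closed, let $\bar z\in S$, and suppose $\psi$ is twice semidifferentiable at $\bar z$. (i) If $\bar z$ is a local minimizer of $\psi$ on $S$, then $\mathrm{d}\psi(\bar z)(w)\ge0$ for all $w\in T_S(\bar z)$, and for every $w\in T_S(\bar z)$ with $\mathrm{d}\psi(\bar z)(w)=0$, $$\mathrm{d}^2\psi(\bar z)(w)+\mathrm{d}^2\delta_S(\bar z;-\mathrm{d}\psi(\bar z))(w)\ge 0.$$ (ii) Suppose $\mathrm{d}\psi(\bar z)(w)\ge0$ for all $w\in T_S(\bar z)$ and that for every $w\in T_S(\bar z)\setminus\{0\}$ with $\mathrm{d}\psi(\bar z)(w)=0$, $$\mathrm{d}^2\psi(\bar z)(w)+\mathrm{d}^2\delta_S(\bar z;-\mathrm{d}\psi(\bar z))(w)>0.$$ Then there exist $\varepsilon>0$ and $\eta>0$ such that $\psi(z)\ge\psi(\bar z)+\varepsilon\|z-\bar z\|^2$ for all $z\in S\cap\mathbb{B}_\eta(\bar z)$; in particular $\bar z$ is a local minimizer of $\psi$ on $S$.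
   Context: $\mathbb{B}_\eta(z)$ is the closed Euclidean ball of radius $\eta$ centered at $z$. For $\psi:\mathbb{R}^r\to\mathbb{R}$ and $\bar z,w\in\mathbb{R}^r$: the subderivative is $\mathrm{d}\psi(\bar z)(w):=\liminf_{t\downarrow0,\,w'\to w}\frac{\psi(\bar z+tw')-\psi(\bar z)}{t}$; $\psi$ is semidifferentiable at $\bar z$ if for every $w$ the limit $\lim_{t\downarrow0,\,w'\to w}\frac{\psi(\bar z+tw')-\psi(\bar z)}{t}$ exists as a real number. The second subderivative is $\mathrm{d}^2\psi(\bar z)(w):=\liminf_{t\downarrow0,\,w'\to w}\frac{\psi(\bar z+tw')-\psi(\bar z)-t\,\mathrm{d}\psi(\bar z)(w')}{\frac12 t^2}$, and $\psi$ is twice semidifferentiable at $\bar z$ if it is semidifferentiable at $\bar z$ and for every $w$ this liminf is a limit and is a real number. $T_S(\bar z)$ is the tangent cone: $w\in T_S(\bar z)$ iff there are $t_k\downarrow0$, $w_k\to w$ with $\bar z+t_kw_k\in S$. For closed $S$, $\bar z\in S$ and $\varphi:\mathbb{R}^r\to\mathbb{R}$, define $\mathrm{d}^2\delta_S(\bar z;\varphi)(w):=\liminf_{t\downarrow0,\,w'\to w,\ \bar z+tw'\in S}\frac{-2\varphi(w')}{t}$ (equal to $+\infty$ if there are no such $t,w'$); thus $\mathrm{d}^2\delta_S(\bar z;-\mathrm{d}\psi(\bar z))(w)=\liminf_{t\downarrow0,\,w'\to w,\ \bar z+tw'\in S}\frac{2\,\mathrm{d}\psi(\bar z)(w')}{t}$.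 *)

(* Defs.v *)
From HB Require Import structures.
From mathcomp Require Import all_boot all_order all_algebra.
From mathcomp Require Import all_classical all_reals all_analysis.
Set Implicit Arguments. Unset Strict Implicit. Unset Printing Implicit Defensive.
Import Order.TTheory GRing.Theory Num.Theory.
Import numFieldNormedType.Exports.
Local Open Scope classical_set_scope.
Local Open Scope ring_scope.

Section Defs.
Variables (R : realType) (r : nat).
Local Notation V := 'rV[R]_r.

Definition enorm (v : V) : R := Num.sqrt (\sum_(i < r) (v ord0 i) ^+ 2).

(* liminf_{t \downarrow 0, w' -> w, C t w'} f t w'  (= +oo if no admissible (t,w')) *)
Definition liminf_tw (C : R -> V -> Prop) (f : R -> V -> \bar R) (w : V) : \bar R :=
  ereal_sup [set ereal_inf [set y | exists (t : R) (w' : V),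
                               0 < t < d /\ enorm (w' - w) < d /\ C t w' /\ y = f t w']
            | d in [set d : R | 0 < d]].

Definition dq1 (psi : V -> R) (z : V) (t : R) (w' : V) : R :=
  (psi (z + t *: w') - psi z) / t.

Definition dsub (psi : V -> R) (z w : V) : \bar R :=
  liminf_tw (fun _ _ => True) (fun t w' => (dq1 psi z t w')%:E) w.

Definition dq2 (psi : V -> R) (z : V) (t : R) (w' : V) : \bar R :=
  (((psi (z + t *: w') - psi z)%:E - t%:E * dsub psi z w') * (2 / t ^+ 2)%:E)%E.

Definition d2sub (psi : V -> R) (z w : V) : \bar R :=
  liminf_tw (fun _ _ => True) (dq2 psi z) w.

Definition semidiff (psi : V -> R) (z : V) : Prop :=
  forall w, exists L : R, forall eps : R, 0 < eps -> exists d : R, 0 < d /\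
    forall t w', 0 < t < d -> enorm (w' - w) < d -> `|dq1 psi z t w' - L| < eps.

Definition twice_semidiff (psi : V -> R) (z : V) : Prop :=
  semidiff psi z /\
  forall w, exists L : R, forall eps : R, 0 < eps -> exists d : R, 0 < d /\
    forall t w', 0 < t < d -> enorm (w' - w) < d ->
      (`|dq2 psi z t w' - L%:E| < eps%:E)%E.

Definition tangent_cone (S : set V) (z w : V) : Prop :=
  exists (tk : nat -> R) (wk : nat -> V),
    (forall k, 0 < tk k) /\ (forall k, S (z + tk k *: wk k)) /\
    (forall eps : R, 0 < eps -> exists N : nat, forall k, (N <= k)%N ->
        `|tk k| < eps /\ enorm (wk k - w) < eps).

Definition d2delta (S : set V) (z : V) (phi : V -> \bar R) (w : V) : \bar R :=
  liminf_tw (fun t w' => S (z + t *: w'))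
            (fun t w' => ((- 2)%:E * phi w' * (t^-1)%:E)%E) w.

Definition local_min_on (psi : V -> R) (S : set V) (z : V) : Prop :=
  S z /\ exists eta : R, 0 < eta /\
    forall x, S x -> enorm (x - z) <= eta -> psi z <= psi x.

End Defs.

(* Main.v *)
Require Import Defs.
From HB Require Import structures.
From mathcomp Require Import all_boot all_order all_algebra.
From mathcomp Require Import all_classical all_reals all_analysis.
From mathcomp Require Import ring lra.
Import Order.TTheory GRing.Theory Num.Theory.
Import numFieldNormedType.Exports.
Local Open Scope classical_set_scope.
Local Open Scope ring_scope.

Section H.
Variables (R : realType) (r : nat).
Local Notation V := 'rV[R]_r.

Lemma enorm_ge0 (v : V) : 0 <= enorm v.
Proof. exact: sqrtr_ge0. Qed.

Lemma coord_le_enorm (v : V) i : `|v ord0 i| <= enorm v.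
Proof.
rewrite /enorm -sqrtr_sqr ler_sqrt; last by apply: sumr_ge0 => j _; apply: sqr_ge0.
rewrite (bigD1 i) //= lerDl; apply: sumr_ge0 => j _; exact: sqr_ge0.
Qed.

Lemma enorm_le (v : V) c : 0 <= c -> (forall i, `|v ord0 i| <= c) ->
  enorm v <= r%:R * c.
Proof.
move=> c0 hc.
rewrite /enorm -(ger0_norm (_ : 0 <= r%:R * c)) ?mulr_ge0 // -sqrtr_sqr ler_sqrt;
  last exact: sqr_ge0.
apply: (@le_trans _ _ (\sum_(i < r) c ^+ 2)).
  apply: ler_sum => i _; have := hc i; rewrite ler_norml => /andP[h1 h2].
  rewrite !expr2; nra.
rewrite sumr_const card_ord exprMn -mulr_natl.
have hr : (r%:R : R) <= r%:R ^+ 2.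
  by rewrite -natrX ler_nat; case: r => // n; rewrite expnS leq_pmulr // expn_gt0.
have := sqr_ge0 c; nra.
Qed.

Lemma enormZ t (v : V) : enorm (t *: v) = `|t| * enorm v.
Proof.
rewrite /enorm -sqrtr_sqr -sqrtrM ?sqr_ge0 //; congr Num.sqrt.
rewrite mulr_sumr; apply: eq_bigr => i _; by rewrite mxE exprMn.
Qed.

Lemma enorm_eq0 (v : V) : enorm v = 0 -> v = 0.
Proof.
move=> h; apply/rowP => i; rewrite mxE; apply/eqP; rewrite -normr_eq0.
by rewrite eq_le normr_ge0 andbT -h coord_le_enorm.
Qed.

Lemma enorm0 : enorm (0 : V) = 0.
Proof. by rewrite -(scale0r (0 : V)) enormZ normr0 mul0r. Qed.

Lemma enormN (v : V) : enorm (- v) = enorm v.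
Proof. by rewrite -scaleN1r enormZ normrN normr1 mul1r. Qed.

Lemma enormD (a b : V) : enorm (a + b) <= r%:R * (enorm a + enorm b).
Proof.
apply: enorm_le; first by rewrite addr_ge0 ?enorm_ge0.
move=> i; rewrite mxE; apply: le_trans (ler_normD _ _) _.
by rewrite lerD ?coord_le_enorm.
Qed.


Lemma liminf_ge (C : R -> V -> Prop) (f : R -> V -> \bar R) w (a : \bar R) d0 :
  0 < d0 -> (forall t w', 0 < t < d0 -> enorm (w' - w) < d0 -> C t w' -> (a <= f t w')%E) ->
  (a <= liminf_tw C f w)%E.
Proof.
move=> d00 H; rewrite /liminf_tw.
apply: le_trans (ereal_sup_ubound _); last by exists d0.
apply: le_ereal_inf_tmp => y [t [w' [h1 [h2 [h3 ->]]]]]; exact: H.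
Qed.

Lemma liminf_le (C : R -> V -> Prop) (f : R -> V -> \bar R) w (a : \bar R) :
  (forall d, 0 < d -> exists t w', [/\ 0 < t < d, enorm (w' - w) < d, C t w' & (f t w' <= a)%E]) ->
  (liminf_tw C f w <= a)%E.
Proof.
move=> H; apply: ge_ereal_sup => _ [d d0 <-].
have [t [w' [h1 h2 h3 h4]]] := H d d0.
apply: le_trans h4; apply: ereal_inf_lbound; exists t, w'; split => //.
Qed.

Lemma minP' (x y : R) : 0 < x -> 0 < y ->
  [/\ 0 < Num.min x y, Num.min x y <= x & Num.min x y <= y].
Proof. by move=> x0 y0; split; rewrite ?lt_min ?ge_min ?lexx ?orbT ?x0 ?y0. Qed.

Lemma liminf_lim (g : R -> V -> R) w L :
  (forall eps, 0 < eps -> exists d, 0 < d /\ forall t w', 0 < t < d ->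
     enorm (w' - w) < d -> `|g t w' - L| < eps) ->
  liminf_tw (fun _ _ => True) (fun t w' => (g t w')%:E) w = L%:E.
Proof.
move=> H; apply/eqP; rewrite eq_le; apply/andP; split.
- apply/lee_addgt0Pr => e e0; apply: liminf_le => d d0.
  have [d1 [d10 H1]] := H e e0.
  have [m0 md md1] := minP' d d1 d0 d10.
  exists (Num.min d d1 / 2), w; split => //.
  + by apply/andP; split; lra.
  + by rewrite subrr enorm0.
  + rewrite -EFinD lee_fin.
    have := H1 (Num.min d d1 / 2) w; rewrite subrr enorm0 => /(_ _ d10).
    have -> : 0 < Num.min d d1 / 2 < d1 by apply/andP; split; lra.
    by move=> /(_ isT); rewrite ltr_norml => /andP[_ h]; lra.
- apply/lee_subgt0Pr => e e0.
  have [d1 [d10 H1]] := H e e0.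
  apply: (liminf_ge _ _ _ _ d1) => // t w' ht hw _.
  rewrite -EFinB lee_fin.
  by have := H1 t w' ht hw; rewrite ltr_norml => /andP[h _]; lra.
Qed.

Lemma dsub_lim (psi : V -> R) z w L :
  (forall eps, 0 < eps -> exists d, 0 < d /\ forall t w', 0 < t < d ->
     enorm (w' - w) < d -> `|dq1 psi z t w' - L| < eps) ->
  dsub psi z w = L%:E.
Proof. move=> H; rewrite /dsub; exact: liminf_lim. Qed.

Lemma dsub_fin (psi : V -> R) z w : semidiff psi z ->
  dsub psi z w = (fine (dsub psi z w))%:E.
Proof. by move=> sd; have [L HL] := sd w; rewrite (dsub_lim psi z w L HL). Qed.

Definition Df (psi : V -> R) z w := fine (dsub psi z w).

Definition q2 (psi : V -> R) z t w' :=
  (psi (z + t *: w') - psi z - t * Df psi z w') * (2 / t ^+ 2).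

Lemma dq2E (psi : V -> R) z t w' : semidiff psi z ->
  dq2 psi z t w' = (q2 psi z t w')%:E.
Proof.
move=> sd; rewrite /dq2 (dsub_fin psi z w' sd) /q2 /Df.
by rewrite -EFinM.
Qed.

Lemma d2sub_lim (psi : V -> R) z w : twice_semidiff psi z ->
  exists L, d2sub psi z w = L%:E /\
   (forall eps, 0 < eps -> exists d, 0 < d /\ forall t w', 0 < t < d ->
     enorm (w' - w) < d -> `|q2 psi z t w' - L| < eps).
Proof.
move=> [sd sd2]; have [L HL] := sd2 w.
have HL' : forall eps, 0 < eps -> exists d, 0 < d /\ forall t w', 0 < t < d ->
     enorm (w' - w) < d -> `|q2 psi z t w' - L| < eps.
  move=> e e0; have [d [d0 Hd]] := HL e e0; exists d; split => // t w' h1 h2.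
  by have := Hd t w' h1 h2; rewrite dq2E // -EFinB /= lte_fin.
exists L; split => //.
rewrite /d2sub (_ : dq2 psi z = fun t w' => (q2 psi z t w')%:E); first exact: liminf_lim.
by apply/funext => t; apply/funext => w'; rewrite dq2E.
Qed.

Lemma d2delta_val (psi : V -> R) z t w' : semidiff psi z ->
  ((- 2)%:E * (- dsub psi z w') * (t^-1)%:E)%E = (2 * Df psi z w' / t)%:E.
Proof.
move=> sd; rewrite (dsub_fin psi z w' sd) -EFinN -!EFinM /Df; congr (_%:E).
by rewrite mulrNN.
Qed.

Definition Mb (w : V) := r%:R * (enorm w + 1) + 1.

Lemma Mb_gt0 w : 0 < Mb w.
Proof.
rewrite /Mb; have := enorm_ge0 w; have : (0 : R) <= r%:R by [].
move=> h1 h2; have : 0 <= r%:R * (enorm w + 1) by apply: mulr_ge0 => //; lra.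
lra.
Qed.

Lemma small_step (zb w w' : V) t eta : 0 < eta -> 0 < t ->
  enorm (w' - w) < 1 -> t < eta / Mb w -> enorm ((zb + t *: w') - zb) <= eta.
Proof.
move=> eta0 t0 hw ht.
rewrite addrAC subrr add0r enormZ gtr0_norm //.
have hM := Mb_gt0 w.
have h1 : enorm w' <= Mb w.
  have -> : w' = w + (w' - w) by rewrite addrC subrK.
  apply: le_trans (enormD _ _) _; rewrite /Mb.
  have : (0 : R) <= r%:R by [].
  have := enorm_ge0 w; have := enorm_ge0 (w + (w' - w) - w).
  rewrite addrAC subrr add0r => h2 h3 h4.
  have : r%:R * (enorm (w' - w)) <= r%:R * 1 by apply: ler_wpM2l => //; lra.
  lra.
have h2 : t * Mb w < eta by rewrite -ltr_pdivlMr.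
have := enorm_ge0 w'; nra.
Qed.

Lemma part1a (psi : V -> R) S zb : semidiff psi zb -> local_min_on psi S zb ->
  forall w, tangent_cone S zb w -> (0 <= dsub psi zb w)%E.
Proof.
move=> sd [Szb [eta [eta0 Hmin]]] w [tk [wk [tk0 [Sk cvg]]]].
have [L HL] := sd w; rewrite (dsub_lim psi zb w L HL) lee_fin leNgt; apply/negP => L0.
have [d [d0 Hd]] := HL (- L) (ltac:(lra)).
have hM := Mb_gt0 w.
have he : 0 < eta / Mb w by apply: divr_gt0.
have [m0 m1 m2] := minP' d (Num.min (eta / Mb w) 1) d0 (ltac:(by rewrite lt_min he ltr01)).
have [m3 m4 m5] := minP' (eta / Mb w) 1 he ltr01.
have [N HN] := cvg _ m0.
have [ht hw] := HN N (leqnn N).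
have t0 := tk0 N; rewrite gtr0_norm // in ht.
have hmin := Hmin _ (Sk N) (small_step zb w (wk N) (tk N) eta eta0 t0 (ltac:(lra)) (ltac:(lra))).
have := Hd (tk N) (wk N) (ltac:(apply/andP; split; lra)) (ltac:(lra)).
rewrite /dq1.
have : 0 <= (psi (zb + tk N *: wk N) - psi zb) / tk N by apply: divr_ge0; lra.
move=> h; rewrite ltr_norml => /andP[_ h']; lra.
Qed.

Lemma part1b (psi : V -> R) S zb : twice_semidiff psi zb -> local_min_on psi S zb ->
  forall w, (0 <= d2sub psi zb w + d2delta S zb (fun w' => - dsub psi zb w') w)%E.
Proof.
move=> tsd [Szb [eta [eta0 Hmin]]] w.
have sd := tsd.1.
have [L2 [-> HL2]] := d2sub_lim psi zb w tsd.
suff h : ((- L2)%:E <= d2delta S zb (fun w' => - dsub psi zb w') w)%E.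
  by apply: le_trans (leeD2l _ h); rewrite -EFinD subrr.
apply/lee_subgt0Pr => e e0.
have [d [d0 Hd]] := HL2 e e0.
have hM := Mb_gt0 w.
have he : 0 < eta / Mb w by apply: divr_gt0.
have [m0 m1 m2] := minP' d (Num.min (eta / Mb w) 1) d0 (ltac:(by rewrite lt_min he ltr01)).
have [m3 m4 m5] := minP' (eta / Mb w) 1 he ltr01.
apply: (liminf_ge _ _ _ _ _ m0) => t w' /andP[t0 ht] hw Sw.
rewrite d2delta_val // -EFinB lee_fin.
have hmin := Hmin _ Sw (small_step zb w w' t eta eta0 t0 (ltac:(lra)) (ltac:(lra))).
have := Hd t w' (ltac:(apply/andP; split; lra)) (ltac:(lra)).
rewrite ltr_norml => /andP[_ h1].
have tn0 : t != 0 by rewrite gt_eqF.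
have hid : q2 psi zb t w' + 2 * Df psi zb w' / t =
    (psi (zb + t *: w') - psi zb) * (2 / t ^+ 2) by rewrite /q2; field.
have : 0 <= (psi (zb + t *: w') - psi zb) * (2 / t ^+ 2).
  by apply: mulr_ge0; [lra | apply: divr_ge0 => //; apply: sqr_ge0].
lra.
Qed.

Lemma cl (u : nat -> V) : (forall k, enorm (u k) <= 1) -> exists w : V,
  forall e : R, 0 < e -> forall N, exists k, (N <= k)%N /\ enorm (u k - w) < e.
Proof.
move=> hu.
pose A := [set v : V | forall i, `[-1, 1]%classic (v ord0 i)].
have cA : compact A := @rV_compact R r (fun=> `[-1, 1]%classic) (fun=> @segment_compact R (-1) 1).
have uA : forall k, A (u k).
  move=> k i /=; rewrite in_itv /= -ler_norml; apply: le_trans (hu k).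
  exact: coord_le_enorm.
have FA : (u @ \oo) A.
  by exists 0%N => // k _; exact: uA.
have [w [_ clw]] := cA _ _ FA.
exists w => e e0 N.
have FP : (u @ \oo) (u @` [set k | (N <= k)%N]).
  by exists N => // k /= hk; exists k.
have e1 : 0 < e / (r%:R + 1) by apply: divr_gt0 => //; lra.
have [v [[k hk <-] hb]] := clw _ _ FP (nbhsx_ballx w _ e1).
exists k; split => //.
move: hb => [_ hb].
have hc : forall i, `|(u k - w) ord0 i| <= e / (r%:R + 1).
  move=> i; have := hb ord0 i; rewrite /ball /= !mxE distrC; exact: ltW.
apply: le_lt_trans (enorm_le (u k - w) _ (ltW e1) hc) _.
have hr : (0:R) <= r%:R by [].
rewrite mulrA ltr_pdivrMr; last lra.
nra.
Qed.

Definition ci (n : nat) : R := (n.+1%:R)^-1.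

Lemma exN (e : R) : 0 < e -> exists N : nat, ci N < e.
Proof.
move=> e0; exists (Num.trunc e^-1); rewrite /ci.
rewrite -[e in _ < e]invrK ltf_pV2 ?posrE ?invr_gt0 ?ltr0n //.
exact: truncnS_gt.
Qed.

Lemma invS_le (m n : nat) : (m <= n)%N -> ci n <= ci m.
Proof. by move=> h; rewrite /ci lef_pV2 ?posrE ?ltr0n // ler_nat ltnS. Qed.

Lemma invS_gt0 (n : nat) : 0 < ci n.
Proof. by rewrite /ci invr_gt0 ltr0n. Qed.

Lemma invS_le1 (n : nat) : ci n <= 1.
Proof. by rewrite /ci invf_le1 ?ler1n ?ltr0n. Qed.

Lemma part2 (psi : V -> R) S zb : S zb -> twice_semidiff psi zb ->
  (forall w, tangent_cone S zb w -> (0 <= dsub psi zb w)%E) ->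
  (forall w, tangent_cone S zb w -> w != 0 -> dsub psi zb w = 0%E ->
        (0 < d2sub psi zb w + d2delta S zb (fun w' => - dsub psi zb w') w)%E) ->
  exists eps : R, 0 < eps /\ exists eta : R, 0 < eta /\
      forall z, S z -> enorm (z - zb) <= eta ->
        psi zb + eps * enorm (z - zb) ^+ 2 <= psi z.
Proof.
move=> Szb tsd H1 H2; have sd := tsd.1.
apply: (@contra_notP _ False); last by []. move=> Hn.
have Hk : forall k : nat, exists z, S z /\ enorm (z - zb) <= ci k /\
    psi z < psi zb + ci k * enorm (z - zb) ^+ 2.
  move=> k; move: Hn; apply: contra_notP => Hk.
  exists (ci k); split; first exact: invS_gt0.
  exists (ci k); split; first exact: invS_gt0.
  move=> z Sz hz; rewrite leNgt; apply/negP => hlt; apply: Hk; exists z; split => //.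
have [zs hz] := choice Hk.
clear Hn Hk.
pose t k := enorm (zs k - zb).
have t0 : forall k, 0 < t k.
  move=> k; rewrite lt_def enorm_ge0 andbT; apply/eqP => h.
  have [_ [_ hp]] := hz k; move: hp; rewrite /t in h; rewrite h.
  rewrite (_ : zs k = zb); last by apply/eqP; rewrite -subr_eq0; apply/eqP; exact: enorm_eq0.
  by rewrite expr0n /= mulr0 addr0 ltxx.
pose wv k := (t k)^-1 *: (zs k - zb).
have wn : forall k, enorm (wv k) = 1.
  move=> k; rewrite enormZ ger0_norm ?invr_ge0 ?enorm_ge0 // mulVf //.
  by rewrite gt_eqF // t0.
have zdef : forall k, zb + t k *: wv k = zs k.
  move=> k; rewrite /wv scalerA mulfV ?gt_eqF ?t0 // scale1r addrC subrK //.
have [w Hw] := cl wv (fun k => eq_ind_r (fun x => x <= 1) (lexx 1) (wn k)).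
have wnz : w != 0.
  apply/eqP => w0; have [k [_ hk]] := Hw 1 ltr01 0%N.
  by move: hk; rewrite w0 subr0 wn ltxx.
have tle : forall k, t k <= ci k by move=> k; have [_ [h _]] := hz k.
have hpsi : forall k, psi (zs k) - psi zb < ci k * t k ^+ 2.
  by move=> k; have [_ [_ h]] := hz k; rewrite ltrBlDl.
clearbody wv t.
have [kk hkk] := choice (fun j : nat => Hw (ci j) (invS_gt0 j) j).
have tc : tangent_cone S zb w.
  exists (fun j => t (kk j)), (fun j => wv (kk j)); split; first by move=> j; exact: t0.
  split; first by move=> j; rewrite zdef; have [h _] := hz (kk j).
  move=> e e0; have [N hN] := exN _ e0; exists N => j hj.
  have [h1 h2] := hkk j.
  have a1 := invS_le _ _ hj; have a2 := invS_le _ _ h1.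
  have ht := tle (kk j); rewrite gtr0_norm; last exact: t0.
  have c1 : ci j < e := le_lt_trans a1 hN.
  split; first exact: le_lt_trans ht (le_lt_trans a2 c1).
  exact: lt_trans h2 c1.
have [Dw HD] := sd w.
have dw := dsub_lim psi zb w Dw HD.
have Dle : Dw <= 0.
  rewrite leNgt; apply/negP => Dpos.
  have [d [d0 Hd]] := HD (Dw / 2) (ltac:(lra)).
  have [m0 m1 m2] := minP' d (Dw / 2) d0 (ltac:(lra)).
  have [N hN] := exN _ m0.
  have [k [hk hwk]] := Hw _ m0 N.
  have a1 := invS_le _ _ hk; have a2 := tle k; have a3 := t0 k; have a4 := hpsi k.
  have a5 := invS_le1 k; have a6 := invS_gt0 k.
  have := Hd (t k) (wv k) (ltac:(apply/andP; split; lra)) (lt_le_trans hwk m1).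
  rewrite /dq1 zdef ltr_norml => /andP[h _].
  have : (psi (zs k) - psi zb) / t k < Dw / 2.
    rewrite ltr_pdivrMr //.
    have : ci k * t k ^+ 2 <= t k * (Dw / 2).
      have ht2 : t k < Dw / 2 by lra.
      have hc : ci k * t k <= t k by nra.
      rewrite expr2 mulrA; nra.
    lra.
  lra.
have D0 : Dw = 0.
  by apply/eqP; rewrite eq_le Dle /= -lee_fin -dw; exact: H1.
have h2 := H2 w tc wnz (ltac:(by rewrite dw D0)).
have [L2 [eL2 HL2]] := d2sub_lim psi zb w tsd.
rewrite eL2 in h2.
suff hd : (d2delta S zb (fun w' => - dsub psi zb w') w <= (- L2)%:E)%E.
  have := leeD2l (L2%:E) hd; rewrite -EFinD subrr => h3.
  by have := lt_le_trans h2 h3; rewrite ltxx.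
apply/lee_addgt0Pr => e e0; apply: liminf_le => d d0.
have [d2 [d20 Hd2]] := HL2 (e / 2) (ltac:(lra)).
have [m0 m1 m2] := minP' d d2 d0 d20.
have [m3 m4 m5] := minP' (Num.min d d2) (e / 4) m0 (ltac:(lra)).
have [N hN] := exN _ m3.
have [k [hk hwk]] := Hw _ m0 N.
have a1 := invS_le _ _ hk; have a2 := tle k; have a3 := t0 k; have a4 := hpsi k.
have a6 := invS_gt0 k.
exists (t k), (wv k); split.
- apply/andP; split; lra.
- lra.
- by rewrite zdef; have [h _] := hz k.
rewrite d2delta_val // -EFinD lee_fin.
have := Hd2 (t k) (wv k) (ltac:(apply/andP; split; lra)) (ltac:(lra)).
rewrite ltr_norml => /andP[h1 _].
have tn0 : t k != 0 by rewrite gt_eqF.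
have hid : q2 psi zb (t k) (wv k) + 2 * Df psi zb (wv k) / t k =
    (psi (zb + t k *: wv k) - psi zb) * (2 / t k ^+ 2) by rewrite /q2; field.
rewrite zdef in hid.
have : (psi (zs k) - psi zb) * (2 / t k ^+ 2) < 2 * ci k.
  have tp : 0 < t k ^+ 2 by apply: exprn_gt0.
  rewrite mulrA ltr_pdivrMr //; nra.
lra.
Qed.

End H.
Theorem mainTheorem2 (R : realType) (r : nat) (psi : 'rV[R]_r -> R)
  (S : set 'rV[R]_r) (zb : 'rV[R]_r) :
  S !=set0 -> closed S -> S zb -> twice_semidiff psi zb ->
  (local_min_on psi S zb ->
     (forall w, tangent_cone S zb w -> (0 <= dsub psi zb w)%E) /\
     (forall w, tangent_cone S zb w -> dsub psi zb w = 0%E ->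
        (0 <= d2sub psi zb w + d2delta S zb (fun w' => - dsub psi zb w') w)%E))
  /\
  ((forall w, tangent_cone S zb w -> (0 <= dsub psi zb w)%E) ->
   (forall w, tangent_cone S zb w -> w != 0 -> dsub psi zb w = 0%E ->
        (0 < d2sub psi zb w + d2delta S zb (fun w' => - dsub psi zb w') w)%E) ->
   (exists eps : R, 0 < eps /\ exists eta : R, 0 < eta /\
      forall z, S z -> enorm (z - zb) <= eta ->
        psi zb + eps * enorm (z - zb) ^+ 2 <= psi z)
   /\ local_min_on psi S zb).
Proof.
move=> _ _ Szb tsd; split.
- move=> lm; split; first exact: (part1a _ _ _ _ _ tsd.1 lm).
  move=> w _ _; exact: (part1b _ _ _ _ _ tsd lm w).
- move=> H1 H2.
  have [eps [eps0 [eta [eta0 H]]]] := part2 _ _ psi S zb Szb tsd H1 H2.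
  split; first by exists eps; split => //; exists eta; split.
  split => //; exists eta; split => // x Sx hx.
  apply: le_trans (H x Sx hx); rewrite lerDl; apply: mulr_ge0; first exact: ltW.
  exact: sqr_ge0.
Qed.
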